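(* Let $L\in\mathbb N$, ${\bf A}\in\mathbb R^{M\times N}$, $\mathcal P_A={\bf A}^\dagger{\bf A}$, and let $\tilde{\bf x}^{(1)},\tilde{\bf x}^{(2)}:[0,\infty)\to\mathbb R^N$ be functions whose entries are all positive and bounded above and bounded away from zero, uniformly in $t$. Suppose $\lim_{t\to\infty}{\bf A}[\tilde{\bf x}^{(1)}(t)-\tilde{\bf x}^{(2)}(t)]=0$ and $$\begin{cases}\lim_{t\to\infty}(I-\mathcal P_A)[\log(\tilde{\bf x}^{(1)}(t))-\log(\tilde{\bf x}^{(2)}(t))]=0 & L=2,\\ \lim_{t\to\infty}(I-\mathcal P_A)[(\tilde{\bf x}^{(1)}(t))^{\odot(\frac2L-1)}-(\tilde{\bf x}^{(2)}(t))^{\odot(\frac2L-1)}]=0 & L\neq2.\end{cases}$$ Then $\lim_{t\to\infty}(\tilde{\bf x}^{(1)}(t)-\tilde{\bf x}^{(2)}(t))=0$.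
   Context: $\odot$ denotes entrywise power and $\log$ acts entrywise; ${\bf A}^\dagger$ is the Moore–Penrose pseudoinverse. *)

(* Defs.v *)
From HB Require Import structures.
From mathcomp Require Import all_boot all_order all_algebra.
From mathcomp Require Import all_classical all_reals all_analysis.
Set Implicit Arguments. Unset Strict Implicit. Unset Printing Implicit Defensive.
Import Order.TTheory GRing.Theory Num.Theory.
Local Open Scope ring_scope.

(* Moore-Penrose pseudoinverse: X is the pseudoinverse of A iff it satisfies
   the four Penrose conditions (which determine X uniquely). *)
Definition moore_penrose (R : realType) (M N : nat)
  (A : 'M[R]_(M, N)) (X : 'M[R]_(N, M)) : Prop :=
  [/\ A *m X *m A = A, X *m A *m X = X,
      (A *m X)^T = A *m X & (X *m A)^T = X *m A].

Definition vlog (R : realType) (N : nat) (v : 'cV[R]_N) : 'cV[R]_N :=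
  map_mx (@ln R) v.
Definition vpow (R : realType) (N : nat) (v : 'cV[R]_N) (p : R) : 'cV[R]_N :=
  map_mx (fun a => powR a p) v.

Definition unif_pos_bounded (R : realType) (N : nat) (x : R -> 'cV[R]_N) : Prop :=
  exists c C : R, 0 < c /\ forall t, 0 <= t -> forall i, c <= x t i ord0 <= C.

(* Main.v *)
Require Import Defs.
From HB Require Import structures.
From mathcomp Require Import all_boot all_order all_algebra.
From mathcomp Require Import all_classical all_reals all_analysis.
From mathcomp Require Import ring lra.
Import Order.TTheory GRing.Theory Num.Theory.
Import numFieldTopology.Exports numFieldNormedType.Exports.
Local Open Scope classical_set_scope.
Local Open Scope ring_scope.

Set Implicit Arguments. Unset Strict Implicit.
Section H.
Variable R : realType.

Lemma cvg_sum0 (I : Type) (r : seq I) (f : I -> R -> R) :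
  (forall i, f i t @[t --> +oo] --> (0:R)) ->
  (\sum_(i <- r) f i t) @[t --> +oo] --> (0:R).
Proof.
move=> H; elim: r => [|a r IH].
  have -> : (fun t => \sum_(i <- [::]) f i t) = (fun=> 0) by apply/funext=> t; rewrite big_nil.
  exact: cvg_cst.
have -> : (fun t => \sum_(i <- a :: r) f i t) = (fun t => f a t + \sum_(i <- r) f i t).
  by apply/funext=> t; rewrite big_cons.
rewrite -[X in _ --> X](addr0 (0:R)); exact: (cvgD (H a) IH).
Qed.

Lemma cvg_entry (N : nat) (f : R -> 'cV[R]_N) :
  f @ +oo --> (0 : 'cV[R]_N) -> forall i, (fun t => f t i ord0) @ +oo --> (0:R).
Proof.
move=> H i.
have := cvg_comp _ _ H (@coord_continuous R N 1 i ord0 0).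
by rewrite mxE.
Qed.

Lemma entry_cvg (N : nat) (f : R -> 'cV[R]_N) :
  (forall i, (fun t => f t i ord0) @ +oo --> (0:R)) -> f @ +oo --> (0 : 'cV[R]_N).
Proof.
move=> H; apply: norm_cvg0.
have S : (\sum_i `|f t i ord0|) @[t --> +oo] --> (0:R).
  apply: cvg_sum0 => i; rewrite -(@normr0 _ R); apply: cvg_norm; exact: H.
apply: (@squeeze_cvgr _ _ _ _ (cst 0) _ _ _ _ _ S); last exact: cvg_cst.
near=> t; rewrite normr_ge0 /=.
have -> : `|f t| = mx_norm (f t) by [].
rewrite mx_normrE; apply: bigmax_le => [|[i j] _]; first exact: sumr_ge0.
rewrite /= (ord1 j) (bigD1 i) //= lerDl; exact: sumr_ge0.
Unshelve. all: end_near. Qed.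

Lemma mulmx_cvg (M N : nat) (B : 'M[R]_(N, M)) (v : R -> 'cV[R]_M) :
  (forall i, (fun t => v t i ord0) @ +oo --> (0:R)) ->
  forall i, (fun t => (B *m v t) i ord0) @ +oo --> (0:R).
Proof.
move=> H i.
have -> : (fun t => (B *m v t) i ord0) = (fun t => \sum_k B i k * v t k ord0).
  by apply/funext=> t; rewrite mxE.
apply: cvg_sum0 => k; rewrite -(mulr0 (B i k)); exact: cvgMl_tmp.
Qed.

Lemma ident_sum (N : nat) (P : 'M[R]_N) (d e : 'cV[R]_N) : P^T = P ->
  \sum_i d i ord0 * e i ord0 =
  \sum_i (P *m d) i ord0 * e i ord0 + \sum_i d i ord0 * ((1%:M - P) *m e) i ord0.
Proof.
move=> PT.
have -> : \sum_i d i ord0 * ((1%:M - P) *m e) i ord0 =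
   \sum_i d i ord0 * e i ord0 - \sum_i d i ord0 * (P *m e) i ord0.
  rewrite -sumrB; apply: eq_bigr => i _.
  by rewrite mulmxBl mul1mx !mxE mulrBr.
suff -> : \sum_i (P *m d) i ord0 * e i ord0 = \sum_i d i ord0 * (P *m e) i ord0 by rewrite [RHS]addrC subrK.
under eq_bigr do rewrite mxE mulr_suml.
rewrite exchange_big /=; apply: eq_bigr => k _.
rewrite mxE mulr_sumr; apply: eq_bigr => i _.
have -> : P i k = P k i by rewrite -{1}PT mxE.
by rewrite mulrCA mulrA.
Qed.
Lemma pos_near : \forall t \near (+oo : set_system R), (0:R) <= t.
Proof. by exists 0; split => // x /ltW. Qed.

Lemma sq_cvg0 (f : R -> R) : (f t ^+ 2) @[t --> +oo] --> (0:R) -> f t @[t --> +oo] --> (0:R).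
Proof.
move=> H.
have Ha : `|f t| @[t --> +oo] --> (0:R).
  have := cvg_comp _ _ H (@sqrt_continuous R 0).
  rewrite sqrtr0 /=.
  have -> : (Num.sqrt \o (fun t => f t ^+ 2)) = (fun t => `|f t|).
    by apply/funext => t; rewrite /= sqrtr_sqr.
  by [].
have Hb : - `|f t| @[t --> +oo] --> (0:R).
  by rewrite -oppr0; exact: (cvgN Ha).
apply: (squeeze_cvgr _ Hb Ha).
near=> t; by rewrite -ler_norml.
Unshelve. all: end_near. Qed.

Lemma key (N : nat) (P : 'M[R]_N) (d e : R -> 'cV[R]_N) (m Bd Be : R) :
  0 < m -> P^T = P ->
  (forall t, 0 <= t -> forall i, m * (d t i ord0)^+2 <= d t i ord0 * e t i ord0) ->
  (forall t, 0 <= t -> forall i, `|d t i ord0| <= Bd /\ `|e t i ord0| <= Be) ->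
  (forall i, (fun t => (P *m d t) i ord0) @ +oo --> (0:R)) ->
  (forall i, (fun t => ((1%:M - P) *m e t) i ord0) @ +oo --> (0:R)) ->
  forall j, (fun t => d t j ord0) @ +oo --> (0:R).
Proof.
move=> m0 PT hm hb HP HQ j.
set h := fun t => m^-1 * (Be * \sum_i `|(P *m d t) i ord0| +
                           Bd * \sum_i `|((1%:M - P) *m e t) i ord0|).
have S1 : (\sum_i `|(P *m d t) i ord0|) @[t --> +oo] --> (0:R).
  apply: cvg_sum0 => i; rewrite -(@normr0 _ R); apply: cvg_norm; exact: HP.
have S2 : (\sum_i `|((1%:M - P) *m e t) i ord0|) @[t --> +oo] --> (0:R).
  apply: cvg_sum0 => i; rewrite -(@normr0 _ R); apply: cvg_norm; exact: HQ.
have hc : h t @[t --> +oo] --> (0:R).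
  rewrite -[X in _ --> X](mulr0 m^-1); apply: cvgMl_tmp.
  rewrite -[X in _ --> X](addr0 (0:R)); apply: cvgD.
    rewrite -[X in _ --> X](mulr0 Be); exact: cvgMl_tmp.
  rewrite -[X in _ --> X](mulr0 Bd); exact: cvgMl_tmp.
apply: sq_cvg0.
apply: (squeeze_cvgr _ (cvg_cst 0) hc).
near=> t.
have t0 : 0 <= t by near: t; exact: pos_near.
rewrite sqr_ge0 /= /h ler_pdivlMl //.
apply: (le_trans (y := \sum_i m * d t i ord0 ^+ 2)).
  rewrite (bigD1 j) //= lerDl; apply: sumr_ge0 => i _.
  by rewrite mulr_ge0 ?sqr_ge0 // ltW.
apply: (le_trans (y := \sum_i d t i ord0 * e t i ord0)).
  by apply: ler_sum => i _; exact: hm.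
rewrite (ident_sum (d t) (e t) PT); apply: lerD.
  rewrite mulr_sumr; apply: ler_sum => i _.
  apply: (le_trans (ler_norm _)); rewrite normrM mulrC.
  apply: ler_wpM2r => //; exact: (hb t t0 i).2.
rewrite mulr_sumr; apply: ler_sum => i _.
apply: (le_trans (ler_norm _)); rewrite normrM.
apply: ler_wpM2r => //; exact: (hb t t0 i).1.
Unshelve. all: end_near. Qed.
Lemma mvt_lt (g dg : R -> R) (s m c C : R) : 0 < c ->
  (forall x : R, 0 < x -> is_derive x 1 g (dg x)) ->
  (forall x : R, c <= x <= C -> m <= s * dg x) ->
  forall a b, c <= a -> b <= C -> a < b ->
  m * (a - b)^+2 <= (a - b) * (s * (g a - g b)).
Proof.
move=> c0 gd hm a b ca bC ab.
have a0 : 0 < a by exact: lt_le_trans ca.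
have [x xab E] : exists2 x, x \in `]a, b[ & g b - g a = dg x * (b - a).
  apply: MVT => //.
    move=> x; rewrite in_itv /= => /andP[ax _]; apply: gd; exact: lt_trans ax.
  apply: derivable_within_continuous => x; rewrite in_itv /= => /andP[ax _].
  have := gd x (lt_le_trans a0 ax); move=> [] //.
move: xab; rewrite in_itv /= => /andP[ax xb].
have : m <= s * dg x.
  apply: hm; apply/andP; split.
    exact: le_trans ca (ltW ax).
  exact: le_trans (ltW xb) bC.
move=> hmx.
have -> : (a - b) * (s * (g a - g b)) = (s * dg x) * (a - b)^+2.
  have -> : g a - g b = - (g b - g a) by rewrite opprB.
  rewrite E; ring.
apply: ler_wpM2r => //; exact: sqr_ge0.
Qed.
Lemma mvt_ineq (g dg : R -> R) (s m c C : R) : 0 < c ->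
  (forall x : R, 0 < x -> is_derive x 1 g (dg x)) ->
  (forall x : R, c <= x <= C -> m <= s * dg x) ->
  forall a b, c <= a <= C -> c <= b <= C ->
  m * (a - b)^+2 <= (a - b) * (s * (g a - g b)).
Proof.
move=> c0 gd hm a b /andP[ca aC] /andP[cb bC].
case: (ltgtP a b) => [ab|ba|->].
- exact: (mvt_lt c0 gd hm ca bC ab).
- have := mvt_lt c0 gd hm cb aC ba.
  have -> : (a - b) * (s * (g a - g b)) = (b - a) * (s * (g b - g a)) by ring.
  have -> : (a - b)^+2 = (b - a)^+2 by ring.
  by [].
- by rewrite subrr expr0n /= mulr0 mul0r.
Qed.

Lemma ln_bnd (c C x : R) : 0 < c -> c <= x <= C -> `|ln x| <= `|ln c| + `|ln C|.
Proof.
move=> c0 /andP[cx xC].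
have x0 : 0 < x by exact: lt_le_trans cx.
have C0 : 0 < C by exact: lt_le_trans xC.
have h1 : ln c <= ln x by rewrite ler_ln.
have h2 : ln x <= ln C by rewrite ler_ln.
have h3 := ler_norm (ln C). have h4 := ler_norm (- ln c).
rewrite normrN in h4.
have h5 := normr_ge0 (ln c). have h6 := normr_ge0 (ln C).
rewrite ler_norml; apply/andP; split; lra.
Qed.

Lemma powR_lb (c C x q : R) : 0 < c -> c <= x <= C ->
  expR (- (`|q| * (`|ln c| + `|ln C|))) <= x `^ q.
Proof.
move=> c0 hx; have x0 : 0 < x by case/andP: hx => h _; exact: lt_le_trans h.
rewrite /powR gt_eqF // ler_expR.
have := ln_bnd c0 hx => hb.
have : `|q * ln x| <= `|q| * (`|ln c| + `|ln C|).
  by rewrite normrM; apply: ler_wpM2l.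
rewrite ler_norml => /andP[] //.
Qed.

Lemma powR_ub (c C x q : R) : 0 < c -> c <= x <= C ->
  x `^ q <= expR (`|q| * (`|ln c| + `|ln C|)).
Proof.
move=> c0 hx; have x0 : 0 < x by case/andP: hx => h _; exact: lt_le_trans h.
rewrite /powR gt_eqF // ler_expR.
have := ln_bnd c0 hx => hb.
have : `|q * ln x| <= `|q| * (`|ln c| + `|ln C|).
  by rewrite normrM; apply: ler_wpM2l.
rewrite ler_norml => /andP[] //.
Qed.
End H.

Unset Implicit Arguments. Set Strict Implicit.
Theorem mainTheorem13 (R : realType) (L M N : nat) (A : 'M[R]_(M, N))
  (Adag : 'M[R]_(N, M)) (x1 x2 : R -> 'cV[R]_N) :
  (1 <= L)%N ->
  moore_penrose A Adag ->
  unif_pos_bounded x1 -> unif_pos_bounded x2 ->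
  (fun t => A *m (x1 t - x2 t)) @ +oo --> (0 : 'cV[R]_M) ->
  (if L == 2%N then
     (fun t => (1%:M - Adag *m A) *m (vlog (x1 t) - vlog (x2 t))) @ +oo
       --> (0 : 'cV[R]_N)
   else
     (fun t => (1%:M - Adag *m A) *m
        (vpow (x1 t) (2 / L%:R - 1) - vpow (x2 t) (2 / L%:R - 1))) @ +oo
       --> (0 : 'cV[R]_N)) ->
  (fun t => x1 t - x2 t) @ +oo --> (0 : 'cV[R]_N).
Proof.
move=> L1 [_ _ _ PT] [c1 [C1 [c10 b1]]] [c2 [C2 [c20 b2]]] HA HL.
set c := Num.min c1 c2; set C := Num.max (Num.max C1 C2) c.
have c0 : 0 < c by rewrite lt_min c10 c20.
have cC : c <= C by rewrite le_max lexx orbT.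
have C0 : 0 < C by exact: lt_le_trans c0 cC.
have bx1 t : 0 <= t -> forall i, c <= x1 t i ord0 <= C.
  move=> t0 i; have /andP[h1 h2] := b1 t t0 i.
  by rewrite ge_min !le_max h1 h2 ?orbT.
have bx2 t : 0 <= t -> forall i, c <= x2 t i ord0 <= C.
  move=> t0 i; have /andP[h1 h2] := b2 t t0 i.
  by rewrite ge_min !le_max h1 h2 ?orbT.
set P := Adag *m A.
have HP : forall i, (fun t => (P *m (x1 t - x2 t)) i ord0) @ +oo --> (0:R).
  move=> i.
  have -> : (fun t => (P *m (x1 t - x2 t)) i ord0) =
            (fun t => (Adag *m (A *m (x1 t - x2 t))) i ord0).
    by apply/funext => t; rewrite mulmxA.
  apply: mulmx_cvg; exact: cvg_entry.
have Bd t : 0 <= t -> forall i, `|(x1 t - x2 t) i ord0| <= C - c.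
  move=> t0 i; rewrite !mxE.
  have /andP[h1 h2] := bx1 t t0 i; have /andP[h3 h4] := bx2 t t0 i.
  rewrite ler_norml; apply/andP; split; lra.
apply: entry_cvg.
case: eqP HL => [L2|Ln2] HL.
-
  apply: (@key R N P (fun t => x1 t - x2 t) (fun t => vlog (x1 t) - vlog (x2 t))
            C^-1 (C - c) (ln C - ln c)) => //.
  + by rewrite invr_gt0.
  + move=> t t0 i; rewrite !mxE.
    have := @mvt_ineq R (@ln R) (fun x => x^-1) 1 C^-1 c C c0 _ _ _ _ (bx1 t t0 i) (bx2 t t0 i).
    rewrite mul1r; apply.
    * move=> x /andP[cx xC]; have x0 : 0 < x by exact: lt_le_trans cx.
      by rewrite mul1r lef_pV2 // posrE.
  + move=> t t0 i; split; first exact: Bd.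
    rewrite !mxE.
    have /andP[h1 h2] := bx1 t t0 i; have /andP[h3 h4] := bx2 t t0 i.
    have a0 : 0 < x1 t i ord0 by exact: lt_le_trans h1.
    have b0 : 0 < x2 t i ord0 by exact: lt_le_trans h3.
    have l1 : ln c <= ln (x1 t i ord0) by rewrite ler_ln.
    have l2 : ln (x1 t i ord0) <= ln C by rewrite ler_ln.
    have l3 : ln c <= ln (x2 t i ord0) by rewrite ler_ln.
    have l4 : ln (x2 t i ord0) <= ln C by rewrite ler_ln.
    rewrite ler_norml; apply/andP; split; lra.
  + move=> i; exact: cvg_entry.
- set p : R := 2 / L%:R - 1.
  have pn0 : p != 0.
    apply/negP => /eqP p0.
    have Lr : (L%:R : R) != 0 by rewrite pnatr_eq0 -lt0n.
    have h2 : (2 : R) = L%:R.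
      have : 2 / L%:R = (1 : R) by apply/eqP; rewrite -subr_eq0; apply/eqP.
      by move=> h; rewrite -[LHS](divfK Lr) h mul1r.
    by apply: Ln2; apply/eqP; rewrite -(eqr_nat R) -h2.
  set K := `|ln c| + `|ln C|.
  set E := expR (`|p| * K).
  apply: (@key R N P (fun t => x1 t - x2 t)
            (fun t => p *: (vpow (x1 t) p - vpow (x2 t) p))
            (p ^+ 2 * expR (- (`|p - 1| * K))) (C - c) (`|p| * (E + E))) => //.
  + by rewrite mulr_gt0 ?expR_gt0 // lt_def sqr_ge0 andbT sqrf_eq0 pn0.
  + move=> t t0 i; rewrite !mxE.
    have := @mvt_ineq R (fun x => x `^ p) (fun x => p * x `^ (p - 1)) p
       (p ^+ 2 * expR (- (`|p - 1| * K))) c C c0 _ _ _ _ (bx1 t t0 i) (bx2 t t0 i).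
    apply.
    all: try (move=> x x0; exact: is_derive1_powR).
    move=> x hx; rewrite mulrA -expr2; apply: ler_wpM2l; first exact: sqr_ge0.
    exact: powR_lb.
  + move=> t t0 i; split; first exact: Bd.
    rewrite !mxE normrM; apply: ler_wpM2l => //.
    have u1 := powR_ub (p) c0 (bx1 t t0 i).
    have u2 := powR_ub (p) c0 (bx2 t t0 i).
    have v1 := powR_ge0 (x1 t i ord0) p.
    have v2 := powR_ge0 (x2 t i ord0) p.
    rewrite -/K -/E in u1 u2.
    rewrite ler_norml; apply/andP; split; lra.
  + move=> i.
    have -> : (fun t => ((1%:M - P) *m (p *: (vpow (x1 t) p - vpow (x2 t) p))) i ord0) =
      (fun t => p * (((1%:M - P) *m (vpow (x1 t) p - vpow (x2 t) p)) i ord0)).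
      by apply/funext => t; rewrite -scalemxAr mxE.
    rewrite -[X in _ --> X](mulr0 p); apply: cvgMl_tmp.
    exact: (cvg_entry HL).
Qed.
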